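(* For every round $k$-sphere $S\subset\mathbb R^n$ there are a classical linkage $\mathcal L$ in $\mathbb R^n$ and a vertex $v\in\mathcal V(\mathcal L)$ such that $S=\mathcal{SC}(\mathcal L,\{v\})$; moreover the map $\rho_v\colon\mathcal C(\mathcal L)\to\mathbb R^n$, $\varphi\mapsto\varphi(v)$, is an isomorphism onto its image $S$.
   Context: A classical linkage in $\mathbb R^n$ is $\mathcal L=(L,\ell,V,\mu)$: $L$ a finite one-dimensional simplicial complex (vertex set $\mathcal V(L)=\mathcal V(\mathcal L)$, edge set $\mathcal E(L)$), $\ell\colon\mathcal E(L)\to(0,\infty)$, $V\subset\mathcal V(L)$ fixed vertices, $\mu\colon V\to\mathbb R^n$. $\mathcal C(\mathcal L)=\{\varphi\colon\mathcal V(L)\to\mathbb R^n\mid\varphi(v)=\mu(v)\ (v\in V),\ |\varphi(v)-\varphi(w)|=\ell(vw)\ (vw\in\mathcal E(L))\}$ and $\mathcal{SC}(\mathcal L,W)=\{\varphi|_W\mid\varphi\in\mathcal C(\mathcal L)\}$. A round $k$-sphere in $\mathbb R^n$ is the set of points at distance $r>0$ from a center point within some $(k+1)$-dimensional affine subspace containing the center. A homeomorphism $g$ is an isomorphism if $g$ and $g^{-1}$ are restrictions of entire rational functions. *)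

(* Defs.v *)
From HB Require Import structures.
From mathcomp Require Import all_boot all_order all_algebra.
From mathcomp Require Import reals.
From mathcomp Require mpoly.

Set Implicit Arguments.
Unset Strict Implicit.
Unset Printing Implicit Defensive.

Import Order.TTheory GRing.Theory Num.Theory.
Local Open Scope ring_scope.

Section Defs.
Variable R : realType.

Definition enorm (n : nat) (x : 'rV[R]_n) : R :=
  Num.sqrt (\sum_(i < n) x 0 i ^+ 2).

Definition fdist (T : finType) (a b : {ffun T -> R}) : R :=
  Num.sqrt (\sum_(t : T) (a t - b t) ^+ 2).

(* A round k-sphere in R^n: points at distance r > 0 from a center c within a
   (k+1)-dimensional affine subspace c + rowspace(U) containing c. *)
Definition round_sphere (n k : nat) (S : 'rV[R]_n -> Prop) : Prop :=
  exists (c : 'rV[R]_n) (r : R) (U : 'M[R]_(k.+1, n)),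
    0 < r /\ \rank U = k.+1 /\
    forall x : 'rV[R]_n, S x <-> ((x - c <= U)%MS /\ enorm (x - c) = r).

(* A classical linkage in R^n: a finite 1-dimensional simplicial complex
   (vertex type lvert, edges = 2-element vertex sets), edge lengths > 0,
   fixed vertices lfixed with positions lmu. *)
Record linkage (n : nat) := Linkage {
  lvert : finType;
  ledges : {set {set lvert}};
  ledges_card : forall e, e \in ledges -> #|e| = 2%N;
  llen : {set lvert} -> R;
  llen_pos : forall e, e \in ledges -> 0 < llen e;
  lfixed : {set lvert};
  lmu : lvert -> 'rV[R]_n
}.
Arguments ledges {n} l.
Arguments llen {n} l _.
Arguments lfixed {n} l.
Arguments lmu {n} l _.

Definition config (n : nat) (L : linkage n) (phi : lvert L -> 'rV[R]_n) : Prop :=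
  (forall v, v \in lfixed L -> phi v = lmu L v) /\
  (forall (v w : lvert L), [set v; w] \in ledges L ->
      enorm (phi v - phi w) = llen L [set v; w]).

Arguments config {n} L phi.

(* C(L) as a subset of R^(V(L) x n), in coordinates *)
Definition cspace (n : nat) (L : linkage n) (a : {ffun (lvert L * 'I_n) -> R}) : Prop :=
  config L (fun v => \row_i a (v, i)).

Definition rho (n : nat) (L : linkage n) (v : lvert L)
    (a : {ffun (lvert L * 'I_n) -> R}) : {ffun 'I_n -> R} :=
  [ffun i => a (v, i)].

(* f restricted to X is the restriction of an entire rational (polynomial) map *)
Definition polymap_on (T T' : finType) (X : {ffun T -> R} -> Prop)
    (f : {ffun T -> R} -> {ffun T' -> R}) : Prop :=
  exists P : T' -> mpoly.mpoly #|T| R,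
    forall a, X a -> forall j,
      f a j = mpoly.meval (fun i : 'I_#|T| => a (enum_val i)) (P j).

Definition cont_on (T T' : finType) (X : {ffun T -> R} -> Prop)
    (f : {ffun T -> R} -> {ffun T' -> R}) : Prop :=
  forall a, X a -> forall e : R, 0 < e -> exists d : R, 0 < d /\
    forall b, X b -> fdist a b < d -> fdist (f a) (f b) < e.

Definition isomorphism (T T' : finType) (X : {ffun T -> R} -> Prop)
    (Y : {ffun T' -> R} -> Prop) (f : {ffun T -> R} -> {ffun T' -> R}) : Prop :=
  exists g : {ffun T' -> R} -> {ffun T -> R},
    (forall a, X a -> Y (f a)) /\ (forall b, Y b -> X (g b)) /\
    (forall a, X a -> g (f a) = a) /\ (forall b, Y b -> f (g b) = b) /\
    cont_on X f /\ cont_on Y g /\ polymap_on X f /\ polymap_on Y g.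

End Defs.

Arguments ledges {R n} l.
Arguments llen {R n} l _.
Arguments lfixed {R n} l.
Arguments lmu {R n} l _.
Arguments config {R n} L phi.
Arguments cspace {R n} L a.
Arguments rho {R n L} v a.

(* Main.v *)
Require Import Defs.
From HB Require Import structures.
From mathcomp Require Import all_boot all_order all_algebra.
From mathcomp Require Import reals.
From mathcomp Require mpoly.
From mathcomp Require Import lra.
Import Order.TTheory GRing.Theory Num.Theory.
Local Open Scope ring_scope.

Set Implicit Arguments.
Unset Strict Implicit.
Unset Printing Implicit Defensive.

Section Constr.
Variables (R : realType) (n m : nat) (c : 'rV[R]_n) (r : R) (U : 'M[R]_(m, n)).
Hypothesis hr : 0 < r.

Definition wv (j : 'I_n) : 'rV[R]_n := \row_i cokermx U i j.
Definition sq (y : 'rV[R]_n) := \sum_i y 0 i ^+ 2.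
Definition dot (y z : 'rV[R]_n) := \sum_i y 0 i * z 0 i.

Lemma sq_ge0 y : 0 <= sq y.
Proof. by apply: sumr_ge0 => i _; rewrite sqr_ge0. Qed.

Lemma enormE y : enorm (R:=R) y = Num.sqrt (sq y).
Proof. by []. Qed.

Lemma sq_sub y z : sq (y - z) = sq y - dot y z *+ 2 + sq z.
Proof.
rewrite /sq /dot.
under eq_bigr do rewrite !mxE sqrrB.
by rewrite !big_split /= sumrN sumrMnl.
Qed.

Lemma sqN y : sq (- y) = sq y.
Proof. by rewrite /sq; apply: eq_bigr => i _; rewrite !mxE sqrrN. Qed.

Lemma enormN (y : 'rV[R]_n) : enorm (- y) = enorm y.
Proof. by rewrite !enormE sqN. Qed.

Lemma subU y : (y <= U)%MS <-> forall j, dot y (wv j) = 0.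
Proof.
rewrite submxE; split.
  move=> /eqP H j; have := congr1 (fun M : 'M[R]_(1, n) => M 0 j) H.
  by rewrite !mxE => <-; rewrite /dot; apply: eq_bigr => i _; rewrite !mxE.
move=> H; apply/eqP/rowP => j; rewrite !mxE -[RHS](H j) /dot.
by apply: eq_bigr => i _; rewrite !mxE.
Qed.

Lemma edge_len x j : enorm (x - c) = r ->
  (enorm (x - (c + wv j)) = Num.sqrt (r ^+ 2 + sq (wv j)) <-> dot (x - c) (wv j) = 0).
Proof.
move=> Hr.
have Hs : sq (x - c) = r ^+ 2.
  by rewrite -Hr enormE sqr_sqrtr // sq_ge0.
have -> : x - (c + wv j) = (x - c) - wv j by rewrite opprD addrA.
rewrite enormE sq_sub Hs.
have h1 := sq_ge0 (wv j).
split.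
  move=> /eqP; rewrite eqr_sqrt.
  - move=> /eqP H. have : dot (x - c) (wv j) *+ 2 = 0 by lra.
    by move/eqP; rewrite mulrn_eq0 /= => /eqP.
  - by rewrite -Hs -sq_sub sq_ge0.
  - have := sqr_ge0 r; lra.
by move=> ->; rewrite mul0rn subr0.
Qed.

Definition V := option (option 'I_n).
Definition pos (o : option 'I_n) : 'rV[R]_n :=
  match o with None => c | Some j => c + wv j end.
Definition len (u : V) : R :=
  match u with Some (Some j) => Num.sqrt (r ^+ 2 + sq (wv j)) | _ => r end.
Definition llenf (e : {set V}) : R :=
  match [pick u in e | u != None] with Some u => len u | None => r end.
Definition Ed : {set {set V}} := [set e : {set V} | ((None : V) \in e) && (#|e| == 2)%N].
Definition mu (u : V) : 'rV[R]_n := match u with Some o => pos o | None => c end.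

Lemma Ecard : forall e : {set V}, e \in Ed -> #|e| = 2%N.
Proof. by move=> e; rewrite inE => /andP[_ /eqP]. Qed.

Lemma len_pos u : 0 < len u.
Proof.
case: u => [[j|]|] //=; rewrite sqrtr_gt0.
have := sq_ge0 (wv j); have : 0 < r ^+ 2 by rewrite exprn_gt0.
lra.
Qed.

Lemma llen_pos : forall e : {set V}, e \in Ed -> 0 < llenf e.
Proof. by move=> e _; rewrite /llenf; case: pickP => [u _|_] //; apply: len_pos. Qed.

Definition Lk : linkage R n :=
  @Linkage R n V Ed Ecard llenf llen_pos [set u : V | u != None] mu.

Lemma llen2 o : llenf [set None; Some o] = len (Some o).
Proof.
rewrite /llenf; case: pickP => [u /andP[Hu Hne] | H].
  by move: Hu; rewrite in_set2 (negbTE Hne) /= => /eqP ->.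
by have := H (Some o); rewrite in_set2 eqxx orbT.
Qed.

Lemma configP (psi : V -> 'rV[R]_n) :
  config Lk psi <-> ((forall o, psi (Some o) = pos o) /\
                     (psi None - c <= U)%MS /\ enorm (psi None - c) = r).
Proof.
split.
  move=> [Hf He].
  have Hfix o : psi (Some o) = pos o by apply: (Hf (Some o)); rewrite inE.
  have Hc : enorm (psi None - c) = r.
    have := He None (Some None).
    rewrite /= llen2 Hfix; apply.
    by rewrite inE in_set2 eqxx /= cards2.
  split => //; split => //.
  apply/subU => j; apply/(edge_len _ Hc).
  have := He None (Some (Some j)).
  rewrite /= llen2 Hfix; apply.
  by rewrite inE in_set2 eqxx /= cards2.
move=> [Hfix [Hsub Hc]]; split.
  by move=> [o|]; rewrite inE //= => _; rewrite Hfix.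
have key o : enorm (psi None - psi (Some o)) = llenf [set None; Some o].
  rewrite llen2 Hfix; case: o => [j|] //=.
  by apply/(edge_len _ Hc); move/subU: Hsub.
move=> a b; rewrite inE in_set2 cards2 => /andP[Hn Hab].
case/orP: Hn => /eqP Ha.
  subst a; case: b Hab => [o|] // _; exact: key.
subst b; case: a Hab => [o|] // _.
by rewrite /= setUC -opprB enormN key.
Qed.

End Constr.

Lemma sum_split (R : realType) (n : nat) (F : V n * 'I_n -> R) :
  \sum_t F t = \sum_i F (None, i) + \sum_(u | u != None) \sum_i F (u, i).
Proof.
have -> : \sum_t F t = \sum_u \sum_i F (u, i).
  by rewrite pair_big /=; apply: eq_bigr => -[u i].
by rewrite (bigD1 None).
Qed.

Theorem lemma4p4 (R : realType) (n k : nat) (S : 'rV[R]_n -> Prop) :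
  round_sphere k S ->
  exists (L : linkage R n) (v : lvert L),
    (forall x : 'rV[R]_n, S x <-> exists phi, config L phi /\ phi v = x) /\
    isomorphism (cspace L) (fun b : {ffun 'I_n -> R} => S (\row_i b i)) (rho v).
Proof.
move=> [c [r [U [hr [_ hS]]]]].
pose L := Lk c U hr.
have cfg psi : config L psi <-> ((forall o, psi (Some o) = pos c U o) /\ S (psi None)).
  rewrite configP hS; tauto.
exists L, (None : V n).
split.
  move=> x; split.
    move=> Sx; exists (fun u : V n => match u with None => x | Some o => pos c U o end).
    by split => //; apply/cfg.
  by move=> [phi [/cfg [_ H] <-]].
pose g (b : {ffun 'I_n -> R}) : {ffun (V n * 'I_n) -> R} :=
  [ffun p => match p.1 with None => b p.2 | Some o => pos c U o 0 p.2 end].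
have rowE (a : {ffun (V n * 'I_n) -> R}) :
  \row_i (rho (L:=L) None a) i = \row_i a (None, i).
  by apply/rowP => i; rewrite !mxE ffunE.
exists g; split; [|split; [|split; [|split; [|split; [|split; [|split]]]]]].
- move=> a /cfg [_ H] /=; by rewrite rowE.
- move=> b Hb; apply/cfg; split.
    by move=> o; apply/rowP => i; rewrite !mxE ffunE.
  by rewrite /=; move: Hb; congr S; apply/rowP => i; rewrite !mxE ffunE.
- move=> a /cfg [Hf _]; apply/ffunP => -[[o|] i]; rewrite !ffunE //=.
  by rewrite -(Hf o) mxE.
- by move=> b _; apply/ffunP => i; rewrite !ffunE.
- move=> a _ e he; exists e; split => // b _; apply: le_lt_trans.
  rewrite /fdist ler_sqrt; last by apply: sumr_ge0 => t _; rewrite sqr_ge0.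
  rewrite (sum_split (fun t => (a t - b t) ^+ 2)) /=.
  under eq_bigr do rewrite !ffunE.
  rewrite lerDl; apply: sumr_ge0 => u _; apply: sumr_ge0 => i _; exact: sqr_ge0.
- move=> a _ e he; exists e; split => // b _.
  suff -> : fdist (g a) (g b) = fdist a b by [].
  rewrite /fdist (sum_split (fun t => (g a t - g b t) ^+ 2)) /=.
  rewrite [X in _ + X]big1 ?addr0; first by congr Num.sqrt; apply: eq_bigr => i _; rewrite !ffunE.
  move=> [o|] // _; apply: big1 => i _; rewrite !ffunE /= subrr.
  by rewrite expr0n.
- exists (fun j => mpoly.mpolyX R (mpoly.mnm1 (enum_rank ((None : V n), j)))).
  by move=> a _ j; rewrite mpoly.mevalXU enum_rankK ffunE.
- exists (fun t : V n * 'I_n => match t.1 with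
     | None => mpoly.mpolyX R (mpoly.mnm1 (enum_rank t.2))
     | Some o => mpoly.mpolyC _ (pos c U o 0 t.2) end).
  move=> b _ [[o|] i]; rewrite ffunE /=.
    by rewrite mpoly.mevalC.
  by rewrite mpoly.mevalXU enum_rankK.
Qed.
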